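(* Let $K$ be any real number field and let $a',b'$ be arbitrary nonzero elements of $K$. Then there exist a generator $g'$ of $K$ (i.e. $\mathbb{Q}(g')=K$) and $x,y,z\in K$ such that $$a'x^2 + b'y^2 - a'b'z^2 = g'.$$
   Context: A real number field is a field $K\subset\mathbb{R}$ with $[K:\mathbb{Q}]<\infty$. *)

(* Defs.v *)
From HB Require Import structures.
From mathcomp Require Import all_boot all_order all_algebra all_field.
From mathcomp Require Import reals.
Set Implicit Arguments. Unset Strict Implicit. Unset Printing Implicit Defensive.
Import Order.TTheory GRing.Theory Num.Theory.
Local Open Scope ring_scope.

(* A number field: K : fieldExtType rat (a field, finite-dimensional over Q).
   It is a *real* number field when it embeds (as a field) into the reals R.
   (Any ring morphism out of a field is injective, so K is isomorphic to a
   subfield of R.) *)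
Definition real_embeddable (R : realType) (K : fieldExtType rat) : Prop :=
  exists f : {rmorphism K -> R}, True.

Definition generator (K : fieldExtType rat) (g : K) : bool :=
  (<<1%VS; g>>%VS == fullv)%VS.

(* Main.v *)
Require Import Defs.
From HB Require Import structures.
From mathcomp Require Import all_boot all_order all_algebra all_field.
From mathcomp Require Import reals.
From mathcomp Require Import zify ring.
Import GRing.Theory.
Local Open Scope ring_scope.

Section S.
Variable K : fieldExtType rat.

Lemma K_char0 : [pchar K] =i pred0.
Proof. by move=> p; rewrite pchar_lalg Num.Theory.pchar_num. Qed.

Lemma PETsq (x y : K) : exists k : nat,
  x \in <<1; (k ^ 2)%:R * y - x>>%VS /\ y \in <<1; (k ^ 2)%:R * y - x>>%VS.
Proof.
have sepall := pcharf0_separable (1%AS : {subfield K}) K_char0.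
have /polyOver_subvs[p Dp]: minPoly 1 x \is a polyOver 1%AS := minPolyOver 1 x.
have nz_pKx: minPoly 1 x != 0 by rewrite monic_neq0 ?monic_minPoly.
have{nz_pKx} nz_p: p != 0 by rewrite Dp map_poly_eq0 in nz_pKx.
have{Dp} px0: root (map_poly vsval p) x by rewrite -Dp root_minPoly.
have /polyOver_subvs[q Dq]: minPoly 1 y \is a polyOver 1%AS := minPolyOver 1 y.
have qy0: root (map_poly vsval q) y by rewrite -Dq root_minPoly.
have sep_pKy: separable_poly (minPoly 1 y) by have := sepall y.
have{sep_pKy} sep_q: separable_poly q by rewrite Dq separable_map in sep_pKy.
have [r nz_r PETr] := large_field_PET nz_p px0 qy0 sep_q.
have /pcharf0P pc0 := K_char0.
pose ts := mkseq (fun n => (n ^ 2)%:R : K) (size r).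
have uts : uniq_roots ts.
  rewrite uniq_rootsE mkseq_uniq // => m n /eqP.
  wlog lt_mn : m n / (n <= m)%N.
    move=> IH; case: (leqP n m) => h; first exact: IH.
    by rewrite eq_sym => /(IH _ _ (ltnW h)) ->.
  rewrite -subr_eq0 -natrB ?leq_exp2r // pc0 subn_eq0 => h.
  by apply/eqP; rewrite -(eqn_exp2r _ _ (isT : (0 < 2)%N)) eqn_leq h leq_exp2r.
have : ~~ all (root r) ts.
  apply/negP => /(max_ring_poly_roots nz_r)/(_ uts).
  by rewrite size_mkseq ltnn.
rewrite all_map => /allPn[n _ /=].
rewrite -(rmorph_nat (vsval : {rmorphism subvs_of (1%AS : {subfield K}) -> K})) => /PETr.
rewrite rmorph_nat => -[[p1 Dx] [q1 Dy]].
exists n.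
set z := _ * y - x in Dx Dy *.
have Kz_p1z (r1 : {poly subvs_of (1%AS : {subfield K})}): (map_poly vsval r1).[z] \in <<1%AS; z>>%VS.
  rewrite rpred_horner ?memv_adjoin ?(polyOverSv (subv_adjoin 1%AS z)) //.
  by apply/polyOver_subvs; exists r1.
by rewrite -{1}Dx -{1}Dy !Kz_p1z.
Qed.
Lemma evenodd (F : {subfield K}) (u : K) (P : {poly K}) :
  u \notin <<F; u ^+ 2>>%VS -> P \is a polyOver F -> root P u -> root P (- u).
Proof.
move=> uM PF Pu.
set M := <<F; u ^+ 2>>%AS.
have hM : minPoly M u %| P.
  apply: minPoly_dvdp => //; apply: polyOverSv PF; exact: subv_adjoin.
pose q := 'X^2 - (u ^+ 2)%:P : {poly K}.
have qM : q \is a polyOver M.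
  by rewrite rpredB ?rpredX ?polyOverX ?polyOverC ?memv_adjoin.
have qu : root q u by rewrite /root !hornerE subrr.
have hq : minPoly M u %| q by apply: minPoly_dvdp.
have sq : size q = 3%N by rewrite size_XnsubC.
have : minPoly M u %= q.
  rewrite -dvdp_size_eqp // sq size_minPoly.
  have d1 : adjoin_degree M u != 1%N by rewrite adjoin_deg_eq1.
  have qn0 : q != 0 by rewrite -size_poly_eq0 sq.
  have := dvdp_leq qn0 hq; rewrite sq size_minPoly => h.
  have := root_size_gt1 (monic_neq0 (monic_minPoly M u)) (root_minPoly M u).
  rewrite size_minPoly => d0.  
  apply/eqP; move: d1 h d0; case: (adjoin_degree M u) => [|[|[|n]]] //.
move=> /eqp_root e.
apply: root_dvdp hM _; rewrite e /root !hornerE sqrrN subrr //.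
Qed.

Lemma good_square (F : {subfield K}) : exists f : K, <<F; f ^+ 2>>%VS = fullv.
Proof.
have sepF : separable F {:K}%AS.
  by apply/separableP => y _; apply: (pcharf0_separable F K_char0).
have Dth := eq_adjoin_separable_generator sepF (subvf F).
set th := separable_generator F _ in Dth.
set p := minPoly F th.
have nz_p : p != 0 by rewrite monic_neq0 ?monic_minPoly.
have /pcharf0P pc0 := K_char0.
pose ts := mkseq (fun n => - th - (n + n)%:R : K) (size p).
have uts : uniq_roots ts.
  rewrite uniq_rootsE mkseq_uniq // => m n /addrI/oppr_inj/eqP.
  wlog lt_mn : m n / (n <= m)%N.
    move=> IH; case: (leqP n m) => h; first exact: IH.
    by rewrite eq_sym => /(IH _ _ (ltnW h)) ->.
  rewrite -subr_eq0 -natrB ?leq_add // pc0 subn_eq0 => h.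
  by apply/eqP; rewrite eqn_leq lt_mn /=; lia.
have : ~~ all (root p) ts.
  apply/negP => /(max_ring_poly_roots nz_p)/(_ uts).
  by rewrite size_mkseq ltnn.
rewrite all_map => /allPn[m _ /=] hr.
exists (th + m%:R).
have hm : th + m%:R \in <<F; (th + m%:R) ^+ 2>>%VS.
  case: (boolP (_ \in _)) => // hn; exfalso; move/negP: hr; apply.
  have := @evenodd F _ (p \Po ('X - (m%:R)%:P)) hn.
  rewrite /root !horner_comp !hornerXsubC addrK.
  have -> : - (th + m%:R) - m%:R = - th - (m + m)%:R.
    by rewrite natrD !opprD !addrA.
  apply.
    by apply: polyOver_comp; rewrite ?minPolyOver // rpredB ?polyOverX ?polyOverC ?rpred_nat.
  by have := root_minPoly F th; rewrite /root.
apply/eqP; rewrite eqEsubv subvf /= Dth.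
apply/FadjoinP; split; first exact: subv_adjoin.
by have := rpredB hm (rpred_nat _ m : m%:R \in <<F; (th + m%:R) ^+ 2>>%AS); rewrite addrK.
Qed.
End S.

Lemma idQ (T : comNzRingType) (a b kk jj f : T) :
  a * 1 ^+ 2 + b * kk ^+ 2 - a * b * (kk * jj * f) ^+ 2 =
  kk ^+ 2 * (jj ^+ 2 * - (a * b * f ^+ 2) - - b) - - a.
Proof. ring. Qed.

Theorem lemma3p4 (R : realType) (K : fieldExtType rat)
  (hK : real_embeddable R K) (a' b' : K) (ha : a' != 0) (hb : b' != 0) :
  exists (g' : K) (x y z : K),
    generator g' /\ a' * x ^+ 2 + b' * y ^+ 2 - a' * b' * z ^+ 2 = g'.
Proof.
set F := <<<<1%AS; a'>>; b'>>%AS.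
have [f Df] := @good_square K F.
have [j [h1 h2]] := @PETsq K (- b') (- (a' * b' * f ^+ 2)).
set w := _ - - b' in h1 h2.
have [k [h3 h4]] := @PETsq K (- a') w.
set z := _ - - a' in h3 h4.
exists z, 1, k%:R, (k%:R * j%:R * f); split; last first.
  by rewrite /z /w !natrX idQ.
have sw : (<<1%AS; w>>%AS <= <<1%AS; z>>%AS)%VS.
  by apply/FadjoinP; split; [exact: sub1v | exact: h4].
have Ha : a' \in <<1%AS; z>>%AS by rewrite -[a']opprK rpredN.
have Hb : b' \in <<1%AS; z>>%AS.
  by rewrite -[b']opprK rpredN; apply: (subvP sw).
have Hab : a' * b' * f ^+ 2 \in <<1%AS; z>>%AS.
  by rewrite -[_ * f ^+ 2]opprK rpredN; apply: (subvP sw).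
have Hf : f ^+ 2 \in <<1%AS; z>>%AS.
  have -> : f ^+ 2 = (a' * b' * f ^+ 2) / (a' * b').
    by rewrite mulrC mulrA mulVf ?mul1r // mulf_neq0.
  by rewrite rpredM // memvV rpredM.
rewrite /generator eqEsubv subvf /= -Df.
apply/FadjoinP; split => //.
apply/FadjoinP; split => //.
apply/FadjoinP; split => //.
exact: sub1v.
Qed.
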